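(* Let $m,p,n$ be positive integers with $p\mid m$, $n>1$. (i) For $\lambda>1$, $\mathbf M_{\boldsymbol\theta}=(M_{\theta_1},\ldots,M_{\theta_n})$ is a $\boldsymbol\Theta_n$-contraction on $L^2(\mathbb D^n,dV^{(\lambda)})$. (ii) For $\lambda\ge1$, the restriction of $\mathbf M_{\boldsymbol\theta}$ to $\mathbb A^{(\lambda)}(\mathbb D^n)$ is a $\boldsymbol\Theta_n$-contraction.
   Context: $\theta_i(z)=s_i(z_1^m,\ldots,z_n^m)$ for $1\le i\le n-1$ ($s_i$ elementary symmetric), $\theta_n(z)=(z_1\cdots z_n)^{m/p}$; a $\boldsymbol\Theta_n$-contraction is a commuting tuple $T$ with $\|f(T)\|\le\sup_{\boldsymbol\theta(\overline{\mathbb D}^n)}|f|$ for all polynomials $f$. For $\lambda>1$, $dV^{(\lambda)}=\big(\frac{\lambda-1}{\pi}\big)^n\prod_{i=1}^n(1-|z_i|^2)^{\lambda-2}dV$ ($dV$ Lebesgue measure on $\mathbb D^n$) and $\mathbb A^{(\lambda)}(\mathbb D^n)$ is the space of holomorphic functions in $L^2(\mathbb D^n,dV^{(\lambda)})$, with reproducing kernel $\prod_{i=1}^n(1-z_i\bar w_i)^{-\lambda}$; $\mathbb A^{(1)}(\mathbb D^n)$ denotes the Hardy space $H^2(\mathbb D^n)$ with kernel $\prod_i(1-z_i\bar w_i)^{-1}$. $M_{\theta_i}$ is multiplication by $\theta_i$. *)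

(* Defs.v *)
From HB Require Import structures.
From mathcomp Require Import all_boot all_order all_algebra.
From mathcomp Require Import complex.
From mathcomp Require mpoly.
From mathcomp Require Import all_classical all_reals all_analysis.
Set Implicit Arguments. Unset Strict Implicit. Unset Printing Implicit Defensive.
Import Order.TTheory GRing.Theory Num.Theory.
Local Open Scope ring_scope.
Local Open Scope classical_set_scope.

Definition toC (R : realType) (x : R * R) : R[i] := Complex x.1 x.2.

Definition cabs (R : realType) (z : R[i]) : R := Normc.normc z.

Definition in_polydisc (R : realType) (n : nat) (z : n.-tuple R[i]) : bool :=
  [forall i, cabs (tnth z i) < 1].
Definition in_cpolydisc (R : realType) (n : nat) (z : n.-tuple R[i]) : bool :=
  [forall i, cabs (tnth z i) <= 1].

Definition esym_eval (R : realType) (n k : nat) (w : 'I_n -> R[i]) : R[i] :=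
  \sum_(S : {set 'I_n} | #|S| == k) \prod_(j in S) w j.

(* theta = (theta_1, ..., theta_n); coordinate i : 'I_n is theta_{i+1}:
   theta_{i+1}(z) = s_{i+1}(z_1^m,...,z_n^m) for i+1 <= n-1,
   theta_n(z) = (z_1 ... z_n)^(m/p). *)
Definition theta (R : realType) (m p n : nat) (z : n.-tuple R[i]) : 'I_n -> R[i] :=
  fun i => if (i.+1 < n)%N then esym_eval i.+1 (fun j => tnth z j ^+ m)
           else (\prod_(j < n) tnth z j) ^+ (m %/ p).

Definition Theta_set (R : realType) (m p n : nat) : set ('I_n -> R[i]) :=
  @theta R m p n @` [set z : n.-tuple R[i] | in_cpolydisc z].

Definition sup_Theta (R : realType) (m p n : nat) (f : mpoly.mpoly n R[i]) : R :=
  sup [set cabs (mpoly.meval v f) | v in @Theta_set R m p n].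

(* operators act on (representatives of) functions C^n -> C *)
Definition fn (R : realType) (n : nat) := n.-tuple R[i] -> R[i].

Definition op_monomial (R : realType) (n : nat) (T : 'I_n -> fn R n -> fn R n)
  (a : mpoly.multinom n) : fn R n -> fn R n :=
  \big[(fun F G => F \o G)/id]_(i < n) iter (mpoly.fun_of_multinom a i) (T i).

Definition op_peval (R : realType) (n : nat) (f : mpoly.mpoly n R[i])
  (T : 'I_n -> fn R n -> fn R n) : fn R n -> fn R n :=
  fun g z => \sum_(a <- mpoly.msupp f) mpoly.mcoeff a f * op_monomial T a g z.

(* Theta_n-contraction on a function space H (a set of representatives)
   whose squared norm is nrm2: T leaves H invariant, the T_i commute, and
   ||f(T)|| <= sup_{Theta_n} |f| for every polynomial f (stated with squared
   norms, i.e. ||f(T) g||^2 <= (sup|f|)^2 ||g||^2 for all g in H). *)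
Definition Theta_contraction (R : realType) (m p n : nat) (H : set (fn R n))
  (nrm2 : fn R n -> \bar R) (T : 'I_n -> fn R n -> fn R n) : Prop :=
  [/\ forall i g, H g -> H (T i g),
      forall i j g, H g -> T i (T j g) = T j (T i g) &
      forall (f : mpoly.mpoly n R[i]) g, H g ->
        (nrm2 (op_peval f T g) <= ((sup_Theta m p f) ^+ 2)%:E * nrm2 g)%E].

Definition Mtheta (R : realType) (m p n : nat) : 'I_n -> fn R n -> fn R n :=
  fun i g z => theta m p z i * g z.

(* integral over C^n = (R x R)^n with respect to Lebesgue measure,
   computed as an iterated integral (Tonelli) *)
Fixpoint cint (R : realType) (n : nat) : (n.-tuple R[i] -> \bar R) -> \bar R :=
  match n with
  | 0 => fun F => F [tuple]
  | n'.+1 => fun F =>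
      (\int[(@lebesgue_measure R \x @lebesgue_measure R)%E]_x
         @cint R n' (fun t => F (cons_tuple (toC x) t)))%E
  end.

(* density of dV^(lambda) with respect to Lebesgue measure dV on D^n *)
Definition weight (R : realType) (n : nat) (lam : R) (z : n.-tuple R[i]) : R :=
  ((lam - 1) / pi) ^+ n *
  \prod_(i < n) powR (1 - cabs (tnth z i) ^+ 2) (lam - 2).

Definition L2norm2 (R : realType) (n : nat) (lam : R) (g : fn R n) : \bar R :=
  @cint R n (fun z => if in_polydisc z then (weight lam z * cabs (g z) ^+ 2)%:E
                   else 0%E).

Definition measurable_on_polydisc (R : realType) (n : nat) (g : fn R n) : Prop :=
  let D := [set x : n.-tuple (R * R) | in_polydisc (map_tuple (@toC R) x)] in
  measurable_fun D (fun x => complex.Re (g (map_tuple (@toC R) x))) /\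
  measurable_fun D (fun x => complex.Im (g (map_tuple (@toC R) x))).

Definition L2 (R : realType) (n : nat) (lam : R) : set (fn R n) :=
  [set g | measurable_on_polydisc g /\ (L2norm2 lam g < +oo)%E].

Definition complex_differentiable_at (R : realType) (h : R[i] -> R[i]) (w : R[i]) :=
  exists l : R[i], forall e : R, 0 < e -> exists2 d : R, 0 < d &
    forall k : R[i], k != 0 -> cabs k < d -> cabs ((h (w + k) - h w) / k - l) < e.

Definition tuple_upd (R : realType) (n : nat) (z : n.-tuple R[i]) (i : 'I_n) (w : R[i]) :
  n.-tuple R[i] := [tuple if j == i then w else tnth z j | j < n].

(* holomorphic on D^n: holomorphic in each variable separately
   (equivalent to joint holomorphy by Hartogs' theorem) *)
Definition holomorphic_polydisc (R : realType) (n : nat) (g : fn R n) : Prop :=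
  forall z : n.-tuple R[i], in_polydisc z -> forall i : 'I_n,
    complex_differentiable_at (fun w => g (tuple_upd z i w)) (tnth z i).

Definition expi (R : realType) (t : R) : R[i] := Complex (cos t) (sin t).

(* integral over the torus T^n with normalized Haar measure *)
Fixpoint tint (R : realType) (n : nat) : (n.-tuple R[i] -> \bar R) -> \bar R :=
  match n with
  | 0 => fun F => F [tuple]
  | n'.+1 => fun F =>
      (\int[@lebesgue_measure R]_(t in `[0%R, (2 * pi)%R]%classic)
         (((2 * pi)^-1)%:E * @tint R n' (fun s => F (cons_tuple (expi t) s))))%E
  end.

Definition hardy_norm2 (R : realType) (n : nat) (g : fn R n) : \bar R :=
  ereal_sup [set @tint R n (fun zeta =>
      (cabs (g (map_tuple (fun w => Complex r 0 * w) zeta)) ^+ 2)%:E)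
    | r in `]0%R, 1%R[%classic].

(* A^(lambda)(D^n): Hardy space for lambda = 1, weighted Bergman space
   (holomorphic functions in L^2(dV^(lambda))) for lambda > 1 *)
Definition Aspace (R : realType) (n : nat) (lam : R) : set (fn R n) :=
  [set g | holomorphic_polydisc g /\
     (if lam == 1 then is_true (hardy_norm2 g < +oo)%E else L2 lam g)].

Definition Anorm2 (R : realType) (n : nat) (lam : R) (g : fn R n) : \bar R :=
  if lam == 1 then hardy_norm2 g else L2norm2 lam g.

(* Main.v *)
Require Import Defs.
From HB Require Import structures.
From mathcomp Require Import all_boot all_order all_algebra.
From mathcomp Require Import complex.
From mathcomp Require mpoly.
From mathcomp Require Import all_classical all_reals all_analysis.
From mathcomp Require Import measurable_realfun.
From mathcomp Require Import ring.
Import Order.TTheory GRing.Theory Num.Theory.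
Local Open Scope ring_scope.
Section IntLemma.
Local Open Scope ereal_scope.
Import HBNNSimple.
Lemma int_le_scale d (T : measurableType d) (R : realType)
  (mu : {measure set T -> \bar R}) (D : set T) (f1 f2 : T -> \bar R) (k : R) :
  (0 <= k)%R -> (forall x, D x -> 0 <= f1 x) -> (forall x, D x -> 0 <= f2 x) ->
  (forall x, D x -> f1 x <= k%:E * f2 x) ->
  \int[mu]_(x in D) f1 x <= k%:E * \int[mu]_(x in D) f2 x.
Proof.
move=> k0 f10 f20 f12.
rewrite (ge0_integralE _ f10) (ge0_integralE _ f20).
apply: ge_ereal_sup => _ [h /= hf1 <-].
have hle x : ((h x)%:E <= k%:E * (f2 \_ D) x).
  apply: (le_trans (hf1 x)); rewrite /patch; case: ifP => [/[1!inE] Dx|_].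
    exact: f12.
  by rewrite mule0.
have [k00|kneq0] := eqVneq k 0%R.
  rewrite k00 in hle *; rewrite mul0e.
  have h0 : forall x, h x = 0%R.
    move=> x; apply/eqP; rewrite eq_le fun_ge0 andbT -lee_fin; by have := hle x; rewrite mul0e.
  have e : (h : T -> R) = cst 0%R by apply/funext => x; exact: h0.
  by rewrite e sintegral0.
have kpos : (0 < k)%R by rewrite lt_def kneq0.
have ki0 : (0 <= k^-1)%R by rewrite invr_ge0.
pose h' := scale_nnsfun h ki0.
have -> : sintegral mu h = sintegral mu (cst k \* h')%R.
  apply: eq_sintegral => x /=; rewrite mulrA divff ?mul1r //.
rewrite sintegralrM lee_wpmul2l ?lee_fin //.
apply: ereal_sup_ubound; exists h' => // x /=.
rewrite EFinM -(@lee_pmul2l _ k%:E) ?lte_fin // muleA -EFinM divff // mul1r.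
exact: hle.
Qed.
End IntLemma.
Section Alg.
Variables (R : realType) (m p n : nat).

Lemma iter_Mtheta k i (h : fn R n) z :
  iter k (@Mtheta R m p n i) h z = theta m p z i ^+ k * h z.
Proof.
elim: k h => [|k IH] h /=; first by rewrite expr0 mul1r.
by rewrite /Mtheta IH exprS mulrA.
Qed.

Lemma big_comp_Mtheta (a : mpoly.multinom n) (r : seq 'I_n) (h : fn R n) z :
  (\big[(fun F G => F \o G)/id]_(i <- r) iter (mpoly.fun_of_multinom a i) (@Mtheta R m p n i)) h z
  = (\prod_(i <- r) theta m p z i ^+ (mpoly.fun_of_multinom a i)) * h z.
Proof.
elim: r h => [|j r IH] h; first by rewrite !big_nil mul1r.
by rewrite !big_cons /= iter_Mtheta IH mulrA.
Qed.

Lemma op_peval_Mtheta (f : mpoly.mpoly n R[i]) (g : fn R n) z :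
  op_peval f (@Mtheta R m p n) g z = mpoly.meval (theta m p z) f * g z.
Proof.
rewrite /op_peval mpoly.mevalE big_distrl /=.
apply: eq_bigr => a _.
by rewrite /op_monomial big_comp_Mtheta mulrA.
Qed.
End Alg.
Section Cabs.
Context {R : realType}.
Local Open Scope complex_scope.
Lemma cabsE (z : R[i]) : `|z| = (cabs z)%:C.
Proof. by case: z => a b; rewrite normc_def. Qed.
Lemma cabs_ge0 (z : R[i]) : 0 <= cabs z.
Proof. by case: z => a b; exact: sqrtr_ge0. Qed.
Lemma cabsM (x y : R[i]) : cabs (x * y) = cabs x * cabs y.
Proof. exact: Normc.normcM. Qed.
Lemma cabsX (x : R[i]) k : cabs (x ^+ k) = cabs x ^+ k.
Proof.
elim: k => [|k IH]; first by rewrite !expr0 /cabs Normc.normc1.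
by rewrite !exprS cabsM IH.
Qed.
Lemma cabs_prod I (r : seq I) (P : pred I) (F : I -> R[i]) :
  cabs (\prod_(i <- r | P i) F i) = \prod_(i <- r | P i) cabs (F i).
Proof.
apply: complexI; rewrite -cabsE normr_prod rmorph_prod /=.
by apply: eq_bigr => i _; rewrite cabsE.
Qed.
Lemma cabs_sum I (r : seq I) (P : pred I) (F : I -> R[i]) :
  cabs (\sum_(i <- r | P i) F i) <= \sum_(i <- r | P i) cabs (F i).
Proof.
rewrite -lecR -cabsE rmorph_sum /=.
apply: le_trans (ler_norm_sum _ _ _) _.
by rewrite le_eqVlt; apply/orP; left; apply/eqP; apply: eq_bigr => i _; exact: cabsE.
Qed.
Lemma cabsD (x y : R[i]) : cabs (x + y) <= cabs x + cabs y.
Proof. by rewrite -lecR -cabsE rmorphD /= -!cabsE ler_normD. Qed.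
Lemma cabsN (x : R[i]) : cabs (- x) = cabs x.
Proof. by apply: complexI; rewrite -!cabsE normrN. Qed.
Lemma cabs0 : cabs (0 : R[i]) = 0.
Proof. exact: Normc.normc0. Qed.
Lemma cabs_eq0 (x : R[i]) : (cabs x == 0) = (x == 0).
Proof. by rewrite -(inj_eq (@complexI _)) -cabsE normr_eq0. Qed.
End Cabs.
Section Bounds.
Variables (R : realType) (m p n : nat).
Definition Kb : R := \sum_(S : {set 'I_n}) (1 : R) + 1.
Lemma Kb_ge1 : 1 <= Kb.
Proof. by rewrite /Kb lerDr sumr_ge0. Qed.

Lemma theta_bound (z : n.-tuple R[i]) : in_cpolydisc z -> forall i, cabs (theta m p z i) <= Kb.
Proof.
move=> /forallP zb i; rewrite /theta; case: ifP => _.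
  rewrite /esym_eval; apply: (le_trans (cabs_sum _ _ _ _)).
  apply: (@le_trans _ _ (\sum_(S : {set 'I_n}) (1:R))); last by rewrite /Kb lerDl.
  rewrite [X in _ <= X](bigID (fun S : {set 'I_n} => #|S| == i.+1)) /= -[X in X <= _]addr0; apply: lerD; last exact: sumr_ge0.
  apply: ler_sum => S _; rewrite cabs_prod; apply: prodr_ile1 => j _.
  by rewrite cabsX exprn_ge0 ?cabs_ge0 // exprn_ile1 ?cabs_ge0.
rewrite cabsX cabs_prod; apply: le_trans Kb_ge1.
apply: exprn_ile1; first by apply: prodr_ge0 => j _; exact: cabs_ge0.
by apply: prodr_ile1 => j _; rewrite cabs_ge0 zb.
Qed.

Lemma meval_bound (f : mpoly.mpoly n R[i]) (v : 'I_n -> R[i]) :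
  (forall i, cabs (v i) <= Kb) ->
  cabs (mpoly.meval v f) <= \sum_(a <- mpoly.msupp f) cabs (mpoly.mcoeff a f) * \prod_(i < n) Kb ^+ (mpoly.fun_of_multinom a i).
Proof.
move=> vb; rewrite mpoly.mevalE; apply: (le_trans (cabs_sum _ _ _ _)).
apply: ler_sum => a _; rewrite cabsM ler_wpM2l ?cabs_ge0 // cabs_prod.
apply: ler_prod => i _; rewrite cabsX exprn_ge0 ?cabs_ge0 //=.
by rewrite lerXn2r ?nnegrE ?cabs_ge0 // (le_trans _ Kb_ge1).
Qed.

Lemma sup_Theta_props (f : mpoly.mpoly n R[i]) :
  0 <= sup_Theta m p f /\
  forall z : n.-tuple R[i], in_cpolydisc z -> cabs (mpoly.meval (theta m p z) f) <= sup_Theta m p f.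
Proof.
have ub : forall z : n.-tuple R[i], in_cpolydisc z -> cabs (mpoly.meval (theta m p z) f) <= sup_Theta m p f.
  move=> z zc; apply: ub_le_sup.
    exists (\sum_(a <- mpoly.msupp f) cabs (mpoly.mcoeff a f) * \prod_(i < n) Kb ^+ (mpoly.fun_of_multinom a i)).
    move=> _ [v [z' z'c <-] <-]; apply: meval_bound; exact: theta_bound.
  by exists (theta m p z) => //; exists z.
split => //.
have z0c : in_cpolydisc [tuple (0 : R[i]) | i < n].
  by apply/forallP => i; rewrite tnth_mktuple cabs0 ler01.
exact: le_trans (cabs_ge0 _) (ub _ z0c).
Qed.
End Bounds.
Section Ints.
Context {R : realType}.
Local Open Scope ereal_scope.

Lemma cint_ge0 n (F : n.-tuple R[i] -> \bar R) : (forall z, 0 <= F z) -> 0 <= cint F.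
Proof.
elim: n F => [|n IH] F F0 /=; first exact: F0.
by apply: integral_ge0 => x _; apply: IH => t; exact: F0.
Qed.

Lemma cint_le n (F1 F2 : n.-tuple R[i] -> \bar R) (k : R) : (0 <= k)%R ->
  (forall z, 0 <= F1 z) -> (forall z, 0 <= F2 z) -> (forall z, F1 z <= k%:E * F2 z) ->
  cint F1 <= k%:E * cint F2.
Proof.
elim: n F1 F2 => [|n IH] F1 F2 k0 h1 h2 h12 /=; first exact: h12.
apply: int_le_scale => // x _; first (by apply: cint_ge0 => t; exact: h1);
  first (by apply: cint_ge0 => t; exact: h2).
by apply: IH.
Qed.

Lemma cabs_expi (t : R) : cabs (expi t) = 1%R.
Proof. by rewrite /cabs /expi /= cos2Dsin2 sqrtr1. Qed.

Lemma cpoly_cons n (x : R[i]) (s : n.-tuple R[i]) : (cabs x <= 1)%R -> in_cpolydisc s ->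
  in_cpolydisc (cons_tuple x s).
Proof.
move=> xb /forallP sb; apply/forallP => i.
case: (unliftP ord0 i) => [j ->|->].
  by have := tnthS x s j; rewrite /cons_tuple => ->; exact: sb.
by have := tnth0 x s; rewrite /cons_tuple => ->.
Qed.

Lemma inv2pi_ge0 : (0 <= (2 * pi)^-1 :> R)%R.
Proof. by rewrite invr_ge0 mulr_ge0 // pi_ge0. Qed.

Lemma tint_ge0 n (F : n.-tuple R[i] -> \bar R) : (forall z, 0 <= F z) -> 0 <= tint F.
Proof.
elim: n F => [|n IH] F F0 /=; first exact: F0.
apply: integral_ge0 => x _; apply: mule_ge0; first by rewrite lee_fin inv2pi_ge0.
by apply: IH => t; exact: F0.
Qed.

Lemma tint_le n (F1 F2 : n.-tuple R[i] -> \bar R) (k : R) : (0 <= k)%R ->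
  (forall z, 0 <= F1 z) -> (forall z, 0 <= F2 z) ->
  (forall z, in_cpolydisc z -> F1 z <= k%:E * F2 z) ->
  tint F1 <= k%:E * tint F2.
Proof.
elim: n F1 F2 => [|n IH] F1 F2 k0 h1 h2 h12 /=.
  apply: h12; by apply/forallP => -[].
apply: int_le_scale => // x _.
- apply: mule_ge0; first by rewrite lee_fin inv2pi_ge0.
  by apply: tint_ge0 => t; exact: h1.
- apply: mule_ge0; first by rewrite lee_fin inv2pi_ge0.
  by apply: tint_ge0 => t; exact: h2.
rewrite muleCA; apply: lee_wpmul2l; first by rewrite lee_fin inv2pi_ge0.
apply: IH => // s sc; apply: h12; apply: cpoly_cons => //.
by rewrite cabs_expi.
Qed.
End Ints.
Section Meas.
Context {R : realType} {n : nat}.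
Local Notation X := (n.-tuple (R * R)).
Definition CM (phi : X -> R[i]) :=
  measurable_fun setT (fun x => complex.Re (phi x)) /\
  measurable_fun setT (fun x => complex.Im (phi x)).

Lemma ReM (a b : R[i]) : complex.Re (a * b) = complex.Re a * complex.Re b - complex.Im a * complex.Im b.
Proof. by case: a => a1 a2; case: b => b1 b2. Qed.
Lemma ImM (a b : R[i]) : complex.Im (a * b) = complex.Re a * complex.Im b + complex.Im a * complex.Re b.
Proof. by case: a => a1 a2; case: b => b1 b2. Qed.
Lemma ReD (a b : R[i]) : complex.Re (a + b) = complex.Re a + complex.Re b.
Proof. by case: a => a1 a2; case: b => b1 b2. Qed.
Lemma ImD (a b : R[i]) : complex.Im (a + b) = complex.Im a + complex.Im b.
Proof. by case: a => a1 a2; case: b => b1 b2. Qed.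

Lemma CM_cst c : CM (fun _ => c).
Proof. by split; exact: measurable_cst. Qed.

Lemma CM_coord j : CM (fun x => tnth (map_tuple (@toC R) x) j).
Proof.
split.
  rewrite (_ : (fun x => _) = (fst \o (@tnth _ (R * R) ^~ j))); last first.
    by apply/funext => x; rewrite tnth_map.
  exact: measurableT_comp (measurable_tnth j).
rewrite (_ : (fun x => _) = (snd \o (@tnth _ (R * R) ^~ j))); last first.
  by apply/funext => x; rewrite tnth_map.
exact: measurableT_comp (measurable_tnth j).
Qed.

Lemma CM_add f g : CM f -> CM g -> CM (fun x => f x + g x).
Proof.
move=> [f1 f2] [g1 g2]; split.
  rewrite (_ : (fun x => _) = (fun x => complex.Re (f x)) \+ (fun x => complex.Re (g x))).
    exact: measurable_funD.
  by apply/funext => x; rewrite ReD.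
rewrite (_ : (fun x => _) = (fun x => complex.Im (f x)) \+ (fun x => complex.Im (g x))).
  exact: measurable_funD.
by apply/funext => x; rewrite ImD.
Qed.

Lemma CM_mul f g : CM f -> CM g -> CM (fun x => f x * g x).
Proof.
move=> [f1 f2] [g1 g2]; split.
  rewrite (_ : (fun x => _) = ((fun x => complex.Re (f x)) \* (fun x => complex.Re (g x)))
     \- ((fun x => complex.Im (f x)) \* (fun x => complex.Im (g x)))).
    by apply: measurable_funB; apply: measurable_funM.
  by apply/funext => x; rewrite ReM.
rewrite (_ : (fun x => _) = ((fun x => complex.Re (f x)) \* (fun x => complex.Im (g x)))
     \+ ((fun x => complex.Im (f x)) \* (fun x => complex.Re (g x)))).
  by apply: measurable_funD; apply: measurable_funM.
by apply/funext => x; rewrite ImM.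
Qed.

Lemma CM_sum I (r : seq I) (P : pred I) (F : I -> X -> R[i]) :
  (forall i, CM (F i)) -> CM (fun x => \sum_(i <- r | P i) F i x).
Proof.
move=> HF; elim: r => [|j r IH].
  by rewrite (_ : (fun x => _) = fun _ => 0); [exact: CM_cst|apply/funext => x; rewrite big_nil].
rewrite (_ : (fun x => _) = fun x => (if P j then F j x else 0) + \sum_(i <- r | P i) F i x).
  by apply: CM_add => //; case: (P j) => //; exact: CM_cst.
by apply/funext => x; rewrite big_cons; case: (P j) => //; rewrite add0r.
Qed.

Lemma CM_prod I (r : seq I) (P : pred I) (F : I -> X -> R[i]) :
  (forall i, CM (F i)) -> CM (fun x => \prod_(i <- r | P i) F i x).
Proof.
move=> HF; elim: r => [|j r IH].
  by rewrite (_ : (fun x => _) = fun _ => 1); [exact: CM_cst|apply/funext => x; rewrite big_nil].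
rewrite (_ : (fun x => _) = fun x => (if P j then F j x else 1) * \prod_(i <- r | P i) F i x).
  by apply: CM_mul => //; case: (P j) => //; exact: CM_cst.
by apply/funext => x; rewrite big_cons; case: (P j) => //; rewrite mul1r.
Qed.

Lemma CM_exp f k : CM f -> CM (fun x => f x ^+ k).
Proof.
move=> Hf; elim: k => [|k IH].
  by rewrite (_ : (fun x => _) = fun _ => 1); [exact: CM_cst|apply/funext => x; rewrite expr0].
rewrite (_ : (fun x => _) = fun x => f x * f x ^+ k); first exact: CM_mul.
by apply/funext => x; rewrite exprS.
Qed.

Lemma CM_theta m p i : CM (fun x => theta m p (map_tuple (@toC R) x) i).
Proof.
rewrite /theta; case: (i.+1 < n)%N.
  rewrite /esym_eval; apply: CM_sum => S; apply: CM_prod => j; apply: CM_exp; exact: CM_coord.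
apply: CM_exp; apply: CM_prod => j; exact: CM_coord.
Qed.

Lemma meas_Mtheta m p i (g : fn R n) : measurable_on_polydisc g ->
  measurable_on_polydisc (@Mtheta R m p n i g).
Proof.
move=> [g1 g2]; have [t1 t2] := CM_theta m p i.
have t1' := measurable_funS measurableT (@subsetT _ _) t1.
have t2' := measurable_funS measurableT (@subsetT _ _) t2.
rewrite /measurable_on_polydisc /Mtheta; split.
  rewrite (_ : (fun x => _) = ((fun x => complex.Re (theta m p (map_tuple (@toC R) x) i)) \* (fun x => complex.Re (g (map_tuple (@toC R) x))))
     \- ((fun x => complex.Im (theta m p (map_tuple (@toC R) x) i)) \* (fun x => complex.Im (g (map_tuple (@toC R) x))))).
    by apply: measurable_funB; apply: measurable_funM.
  by apply/funext => x; rewrite ReM.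
rewrite (_ : (fun x => _) = ((fun x => complex.Re (theta m p (map_tuple (@toC R) x) i)) \* (fun x => complex.Im (g (map_tuple (@toC R) x))))
     \+ ((fun x => complex.Im (theta m p (map_tuple (@toC R) x) i)) \* (fun x => complex.Re (g (map_tuple (@toC R) x))))).
  by apply: measurable_funD; apply: measurable_funM.
by apply/funext => x; rewrite ImM.
Qed.
End Meas.
Section Holo.
Context {R : realType}.
Definition small (phi : R[i] -> R[i]) := forall e : R, 0 < e ->
  exists2 d : R, 0 < d & forall k, k != 0 -> cabs k < d -> cabs (phi k) < e.
Definition bnd (phi : R[i] -> R[i]) := exists M : R,
  exists2 d : R, 0 < d & forall k, k != 0 -> cabs k < d -> cabs (phi k) <= M.

Lemma small_ext phi psi : small phi -> (forall k, k != 0 -> phi k = psi k) -> small psi.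
Proof.
move=> sp e eps eps0; have [d d0 H] := sp eps eps0; exists d => // k k0 kd.
by rewrite -e // H.
Qed.

Lemma small_add phi psi : small phi -> small psi -> small (fun k => phi k + psi k).
Proof.
move=> s1 s2 e e0.
have e20 : 0 < e / 2 by rewrite divr_gt0.
have [d1 d10 H1] := s1 _ e20; have [d2 d20 H2] := s2 _ e20.
exists (Num.min d1 d2); first by rewrite lt_min d10 d20.
move=> k k0; rewrite lt_min => /andP[k1 k2].
apply: (le_lt_trans (cabsD _ _)).
by rewrite (splitr e) ltrD // ?H1 ?H2.
Qed.

Lemma small_mul phi psi : small phi -> bnd psi -> small (fun k => phi k * psi k).
Proof.
move=> s1 [M [d2 d20 H2]] e e0.
set M' := `|M| + 1.
have M'0 : 0 < M' by rewrite /M' ltr_wpDl.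
have [d1 d10 H1] := s1 (e / M') (divr_gt0 e0 M'0).
exists (Num.min d1 d2); first by rewrite lt_min d10 d20.
move=> k k0; rewrite lt_min => /andP[k1 k2].
rewrite cabsM.
apply: (@le_lt_trans _ _ (cabs (phi k) * M')).
  rewrite ler_wpM2l ?cabs_ge0 //; apply: (le_trans (H2 k k0 k2)).
  by rewrite /M' (le_trans (ler_norm M)) // lerDl.
by rewrite -ltr_pdivlMr // H1.
Qed.

Lemma small_id : small (fun k => k).
Proof. by move=> e e0; exists e. Qed.

Lemma small0 : small (fun k => 0).
Proof. by move=> e e0; exists 1 => // k _ _; rewrite cabs0. Qed.

Lemma small_bnd phi : small phi -> bnd phi.
Proof.
move=> s; have [d d0 H] := s 1 ltr01; exists 1; exists d => // k k0 kd.
exact: ltW (H k k0 kd).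
Qed.

Lemma bnd_cst c : bnd (fun _ => c).
Proof. by exists (cabs c); exists 1. Qed.

Lemma bnd_add phi psi : bnd phi -> bnd psi -> bnd (fun k => phi k + psi k).
Proof.
move=> [M1 [d1 d10 H1]] [M2 [d2 d20 H2]]; exists (M1 + M2).
exists (Num.min d1 d2); first by rewrite lt_min d10 d20.
move=> k k0; rewrite lt_min => /andP[k1 k2].
by apply: (le_trans (cabsD _ _)); apply: lerD; [exact: H1|exact: H2].
Qed.

Lemma bnd_mul phi psi : bnd phi -> bnd psi -> bnd (fun k => phi k * psi k).
Proof.
move=> [M1 [d1 d10 H1]] [M2 [d2 d20 H2]]; exists (M1 * M2).
exists (Num.min d1 d2); first by rewrite lt_min d10 d20.
move=> k k0; rewrite lt_min => /andP[k1 k2].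
by rewrite cabsM; apply: ler_pM; rewrite ?cabs_ge0 ?H1 ?H2.
Qed.

Arguments small_ext {phi psi}. Arguments small_add {phi psi}. Arguments small_mul {phi psi}.
Arguments small_bnd {phi}. Arguments bnd_add {phi psi}. Arguments bnd_mul {phi psi}.
Definition dq (h : R[i] -> R[i]) w l := fun k => (h (w + k) - h w) / k - l.

Lemma CDE (h : R[i] -> R[i]) (w : R[i]) : complex_differentiable_at h w <-> exists l, small (dq h w l).
Proof. by []. Qed.

Lemma CD_cst (c w : R[i]) : complex_differentiable_at (fun _ => c) w.
Proof.
apply/CDE; exists 0. apply: (small_ext small0) => k _.
by rewrite /dq subrr mul0r subr0.
Qed.

Lemma CD_id (w : R[i]) : complex_differentiable_at (fun x => x) w.
Proof.
apply/CDE; exists 1; apply: (small_ext small0) => k k0.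
by rewrite /dq addrAC subrr add0r divff // subrr.
Qed.

Lemma CD_add (f g : R[i] -> R[i]) (w : R[i]) : complex_differentiable_at f w -> complex_differentiable_at g w ->
  complex_differentiable_at (fun x => f x + g x) w.
Proof.
move=> /CDE[l1 s1] /CDE[l2 s2]; apply/CDE; exists (l1 + l2).
apply: (small_ext (small_add s1 s2)) => k _; rewrite /dq.
by rewrite opprD addrACA -mulrDl opprD addrACA.
Qed.

Lemma dq_expand (h : R[i] -> R[i]) (w l k : R[i]) : k != 0 -> h (w + k) = h w + k * (dq h w l k + l).
Proof. by move=> k0; rewrite /dq /=; field. Qed.

Lemma CD_mul (f g : R[i] -> R[i]) (w : R[i]) : complex_differentiable_at f w -> complex_differentiable_at g w ->
  complex_differentiable_at (fun x => f x * g x) w.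
Proof.
move=> /CDE[l1 s1] /CDE[l2 s2]; apply/CDE; exists (l1 * g w + f w * l2).
have bB : bnd (fun k => g w + k * (dq g w l2 k + l2)).
  apply: bnd_add; first exact: bnd_cst.
  apply: bnd_mul; first exact: small_bnd small_id.
  by apply: bnd_add; [exact: small_bnd|exact: bnd_cst].
have sA : small (fun k => dq f w l1 k * (g w + k * (dq g w l2 k + l2))) by exact: small_mul.
have sB : small (fun k => (k * (dq g w l2 k + l2)) * l1).
  apply: small_mul; last exact: bnd_cst.
  apply: small_mul; first exact: small_id.
  by apply: bnd_add; [exact: small_bnd|exact: bnd_cst].
have sC : small (fun k => dq g w l2 k * f w) by apply: small_mul => //; exact: bnd_cst.
apply: (small_ext (small_add (small_add sA sB) sC)) => k k0.
by rewrite /dq /=; field.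
Qed.
End Holo.
Section Holo2.
Context {R : realType}.
Local Notation CD := (@complex_differentiable_at R).
Lemma CD_sum I (r : seq I) (P : pred I) (F : I -> R[i] -> R[i]) w :
  (forall i, CD (F i) w) -> CD (fun x => \sum_(i <- r | P i) F i x) w.
Proof.
move=> HF; elim: r => [|j r IH].
  by rewrite (_ : (fun x => _) = fun _ => 0); [exact: CD_cst|apply/funext => x; rewrite big_nil].
rewrite (_ : (fun x => _) = fun x => (if P j then F j x else 0) + \sum_(i <- r | P i) F i x).
  by apply: CD_add => //; case: (P j) => //; exact: CD_cst.
by apply/funext => x; rewrite big_cons; case: (P j) => //; rewrite add0r.
Qed.

Lemma CD_prod I (r : seq I) (P : pred I) (F : I -> R[i] -> R[i]) w :
  (forall i, CD (F i) w) -> CD (fun x => \prod_(i <- r | P i) F i x) w.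
Proof.
move=> HF; elim: r => [|j r IH].
  by rewrite (_ : (fun x => _) = fun _ => 1); [exact: CD_cst|apply/funext => x; rewrite big_nil].
rewrite (_ : (fun x => _) = fun x => (if P j then F j x else 1) * \prod_(i <- r | P i) F i x).
  by apply: CD_mul => //; case: (P j) => //; exact: CD_cst.
by apply/funext => x; rewrite big_cons; case: (P j) => //; rewrite mul1r.
Qed.

Lemma CD_exp (f : R[i] -> R[i]) k w : CD f w -> CD (fun x => f x ^+ k) w.
Proof.
move=> Hf; elim: k => [|k IH].
  by rewrite (_ : (fun x => _) = fun _ => 1); [exact: CD_cst|apply/funext => x; rewrite expr0].
rewrite (_ : (fun x => _) = fun x => f x * f x ^+ k); first exact: CD_mul.
by apply/funext => x; rewrite exprS.
Qed.

Lemma CD_coord n (z : n.-tuple R[i]) (k j : 'I_n) w0 :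
  CD (fun w => tnth (tuple_upd z k w) j) w0.
Proof.
rewrite (_ : (fun w => _) = fun w => if j == k then w else tnth z j).
  by case: (j == k); [exact: CD_id|exact: CD_cst].
by apply/funext => w; rewrite /tuple_upd tnth_mktuple.
Qed.

Lemma CD_theta m p n (z : n.-tuple R[i]) (k i : 'I_n) w0 :
  CD (fun w => theta m p (tuple_upd z k w) i) w0.
Proof.
rewrite /theta; case: (i.+1 < n)%N.
  rewrite /esym_eval; apply: CD_sum => S; apply: CD_prod => j; apply: CD_exp; exact: CD_coord.
apply: CD_exp; apply: CD_prod => j; exact: CD_coord.
Qed.

Lemma holo_Mtheta m p n (i : 'I_n) (g : fn R n) : holomorphic_polydisc g ->
  holomorphic_polydisc (@Mtheta R m p n i g).
Proof.
move=> hg z zD k; rewrite /Mtheta.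
apply: (@CD_mul R (fun w => theta m p (tuple_upd z k w) i) (fun w => g (tuple_upd z k w))).
  exact: CD_theta.
exact: hg.
Qed.
End Holo2.
Section Norms.
Context {R : realType} {n : nat}.
Local Open Scope ereal_scope.

Lemma weight_ge0 (lam : R) (z : n.-tuple R[i]) : (1 <= lam)%R -> (0 <= weight lam z)%R.
Proof.
move=> l1; rewrite /weight mulr_ge0 //.
  by rewrite exprn_ge0 // divr_ge0 ?pi_ge0 // subr_ge0.
by apply: prodr_ge0 => i _; exact: powR_ge0.
Qed.

Lemma L2_le (lam : R) (g1 g2 : fn R n) (k : R) : (1 <= lam)%R -> (0 <= k)%R ->
  (forall z, in_polydisc z -> (cabs (g1 z) ^+ 2 <= k * cabs (g2 z) ^+ 2)%R) ->
  L2norm2 lam g1 <= k%:E * L2norm2 lam g2.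
Proof.
move=> l1 k0 H; apply: cint_le => // z; case: ifP => zD //.
- by rewrite lee_fin mulr_ge0 ?weight_ge0 // exprn_ge0 // cabs_ge0.
- by rewrite lee_fin mulr_ge0 ?weight_ge0 // exprn_ge0 // cabs_ge0.
- by rewrite -EFinM lee_fin [X in (_ <= X)%R]mulrCA ler_wpM2l ?weight_ge0 // H.
- by rewrite mule0.
Qed.

Lemma cabs_real (r : R) : (0 <= r)%R -> cabs (Complex r 0%R) = r.
Proof. by move=> r0; rewrite /cabs /= expr0n /= addr0 sqrtr_sqr ger0_norm. Qed.

Lemma hardy_le (g1 g2 : fn R n) (k : R) : (0 <= k)%R ->
  (forall z, in_cpolydisc z -> (cabs (g1 z) ^+ 2 <= k * cabs (g2 z) ^+ 2)%R) ->
  hardy_norm2 g1 <= k%:E * hardy_norm2 g2.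
Proof.
move=> k0 H; apply: ge_ereal_sup => _ [r rI <-].
move: rI; rewrite /= in_itv /= => /andP[r0 r1].
apply: (@le_trans _ _ (k%:E * tint (fun zeta => ((cabs (g2 (map_tuple (fun w => Complex r 0%R * w) zeta)) ^+ 2)%:E)))).
  apply: tint_le.
- exact: k0.
- by move=> z; rewrite lee_fin exprn_ge0 // cabs_ge0.
- by move=> z; rewrite lee_fin exprn_ge0 // cabs_ge0.
- move=> z zc; rewrite -EFinM lee_fin; apply: H.
  apply/forallP => j; rewrite tnth_map cabsM cabs_real; last exact: ltW.
  rewrite -[1%R]mul1r; apply: ler_pM; [exact: ltW|exact: cabs_ge0|exact: ltW|].
  by move/forallP: zc; apply.
apply: lee_wpmul2l; first by rewrite lee_fin.
by apply: ereal_sup_ubound; exists r => //=; rewrite in_itv /= r0 r1.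
Qed.

Lemma hardy_ge0 (g : fn R n) : 0 <= hardy_norm2 g.
Proof.
apply: (le_trans _ (ereal_sup_ubound _)); last first.
  exists (2^-1)%R => //=; rewrite in_itv /= invr_gt0 ltr0n /= invf_lt1 // ltr1n //.
by apply: tint_ge0 => z; rewrite lee_fin exprn_ge0 // cabs_ge0.
Qed.

Lemma lt_scale_oo (k : R) (x : \bar R) : (0 <= k)%R -> 0 <= x -> x < +oo -> k%:E * x < +oo.
Proof.
by case: x => [r| |] //= k0 _ _; rewrite -EFinM ltey.
Qed.
End Norms.
Section Main.
Context {R : realType} (m p n : nat).
Local Open Scope ereal_scope.

Lemma polydisc_c (z : n.-tuple R[i]) : in_polydisc z -> in_cpolydisc z.
Proof. by move=> /forallP H; apply/forallP => i; exact: ltW (H i). Qed.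

Lemma Mtheta_pt_bound (g : fn R n) (i : 'I_n) z : in_cpolydisc z ->
  (cabs (@Mtheta R m p n i g z) ^+ 2 <= Kb R n ^+ 2 * cabs (g z) ^+ 2)%R.
Proof.
move=> zc; rewrite /Mtheta cabsM exprMn ler_wpM2r ?exprn_ge0 ?cabs_ge0 //.
rewrite lerXn2r ?nnegrE ?cabs_ge0 //; [exact: (le_trans ler01 (Kb_ge1 R n))|exact: (@theta_bound R m p n z zc i)].
Qed.

Lemma peval_pt_bound (f : mpoly.mpoly n R[i]) (g : fn R n) z : in_cpolydisc z ->
  (cabs (op_peval f (@Mtheta R m p n) g z) ^+ 2 <= sup_Theta m p f ^+ 2 * cabs (g z) ^+ 2)%R.
Proof.
move=> zc; have [S0 Sb] := sup_Theta_props R m p n f.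
rewrite op_peval_Mtheta cabsM exprMn ler_wpM2r ?exprn_ge0 ?cabs_ge0 //.
by rewrite lerXn2r ?nnegrE ?cabs_ge0 // Sb.
Qed.

Lemma Mtheta_comm i j (g : fn R n) : @Mtheta R m p n i (@Mtheta R m p n j g) = @Mtheta R m p n j (@Mtheta R m p n i g).
Proof. by apply/funext => z; rewrite /Mtheta mulrCA. Qed.

Lemma L2_inv (lam : R) : (1 <= lam)%R -> forall i g, L2 lam g -> L2 lam (@Mtheta R m p n i g).
Proof.
move=> l1 i g [mg fg]; split; first exact: meas_Mtheta.
apply: (le_lt_trans (L2_le _ _ _ (Kb R n ^+ 2) l1 _ _)).
- by rewrite exprn_ge0 // (le_trans _ (Kb_ge1 R n)).
- by move=> z zD; apply: Mtheta_pt_bound; exact: polydisc_c.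
apply: lt_scale_oo => //; first by rewrite exprn_ge0 // (le_trans _ (Kb_ge1 R n)).
by apply: cint_ge0 => z; case: ifP => // _; rewrite lee_fin mulr_ge0 ?weight_ge0 // exprn_ge0 // cabs_ge0.
Qed.

Lemma L2_contr (lam : R) : (1 <= lam)%R -> forall (f : mpoly.mpoly n R[i]) g,
  L2norm2 lam (op_peval f (@Mtheta R m p n) g) <= ((sup_Theta m p f) ^+ 2)%:E * L2norm2 lam g.
Proof.
move=> l1 f g; apply: L2_le => //; first by rewrite exprn_ge0 // (sup_Theta_props R m p n f).1.
by move=> z zD; apply: peval_pt_bound; exact: polydisc_c.
Qed.
End Main.

Theorem proposition4p11 (R : realType) (m p n : nat) :
  (0 < m)%N -> (0 < p)%N -> (p %| m)%N -> (1 < n)%N ->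
  (forall lam : R, 1 < lam ->
     Theta_contraction m p (@L2 R n lam) (@L2norm2 R n lam) (@Mtheta R m p n)) /\
  (forall lam : R, 1 <= lam ->
     Theta_contraction m p (@Aspace R n lam) (@Anorm2 R n lam) (@Mtheta R m p n)).
Proof.
move=> _ _ _ _; split.
  move=> lam l1; split.
  - exact: (L2_inv m p n lam (ltW l1)).
  - by move=> i j g _; exact: (Mtheta_comm m p n).
  - by move=> f g _; exact: (L2_contr m p n lam (ltW l1)).
move=> lam l1; rewrite /Aspace /Anorm2.
case: eqP => _; split.
- move=> i g [hg fg]; split; first exact: (holo_Mtheta m p n i g hg).
  apply: (le_lt_trans (hardy_le _ _ (Kb R n ^+ 2) _ _)).
  + by rewrite exprn_ge0 // (le_trans _ (Kb_ge1 R n)).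
  + by move=> z zc; exact: (Mtheta_pt_bound m p n g i z zc).
  apply: lt_scale_oo => //; first by rewrite exprn_ge0 // (le_trans _ (Kb_ge1 R n)).
  exact: hardy_ge0.
- by move=> i j g _; exact: (Mtheta_comm m p n).
- move=> f g _; apply: hardy_le; first by rewrite exprn_ge0 // (sup_Theta_props R m p n f).1.
  by move=> z zc; exact: (peval_pt_bound m p n f g z zc).
- move=> i g [hg Lg]; split; first exact: (holo_Mtheta m p n i g hg).
  exact: (L2_inv m p n lam l1 i g Lg).
- by move=> i j g _; exact: (Mtheta_comm m p n).
- by move=> f g _; exact: (L2_contr m p n lam l1 f g).
Qed.
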